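(* Consider the sampling-based safety filter described in the context at time $t$. Let $\epsilon\in(0,1)$ and $\beta\in(0,1)$, and let the number of samples $N$ satisfy $$N\ge\frac{2}{\epsilon}\left(\ln\frac{1}{\beta}+1\right).$$ If the filter intervenes at time $t$ (i.e. $\mathbf{u}^{\mathrm{safe}}_t\ne\mathbf{u}^{\mathrm{nom}}_t$, meaning $\min_i C(\tau^i_{t+1})\ge0$), then, with probability at least $1-\beta$ over the draw of the $N$ i.i.d. samples, the probability that a control sequence $U_{t+1}\sim\tilde q_{t+1}$ yields a safe trajectory from $\mathbf{x}_{t+1}=f(\mathbf{x}_t,\mathbf{u}^{\mathrm{nom}}_t)$ is at most $\epsilon$: $$\Pr_{U_{t+1}\sim\tilde q_{t+1}}\left(\mathcal{O}_{\tau_{t+1}}=1\right)\le\epsilon.$$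
   Context: Consider a deterministic discrete-time system $\mathbf{x}_{t+1}=f(\mathbf{x}_t,\mathbf{u}_t)$ with states $\mathbf{x}_t\in\mathcal{X}$ and inputs $\mathbf{u}_t\in\mathcal{U}$. Let $l:\mathcal{X}\to\mathbb{R}$ be a level function and $\mathcal{L}=\{\mathbf{x}: l(\mathbf{x})\le 0\}$ the failure set. Fix a horizon $H\ge1$. For a state $\mathbf{x}$ and $U=(\mathbf{u}_0,\dots,\mathbf{u}_{H-1})\in\mathcal{U}^H$, the rollout is $\mathbf{x}^U_0=\mathbf{x}$, $\mathbf{x}^U_{k+1}=f(\mathbf{x}^U_k,\mathbf{u}_k)$, giving trajectory $\tau$. The safety indicator is $\mathcal{O}_\tau=1$ if $\mathbf{x}^U_k\notin\mathcal{L}$ for all $k\in\{0,\dots,H\}$ and $0$ otherwise; the cost is $C(\tau)=\max_{k\in\{0,\dots,H\}}\{-l(\mathbf{x}^U_k)\}$. For $U_{t+1}\in\mathcal{U}^H$, $\tau_{t+1}$ denotes its rollout from $\mathbf{x}_{t+1}=f(\mathbf{x}_t,\mathbf{u}^{\mathrm{nom}}_t)$. Safety filter at time $t$: given the current state $\mathbf{x}_t$, a nominal input $\mathbf{u}^{\mathrm{nom}}_t\in\mathcal{U}$ and a stored sequence $U^{\mathrm{safe}}_t=(\bar{\mathbf{u}}_t,\dots,\bar{\mathbf{u}}_{t+H-1})$, it computes $\mathbf{x}_{t+1}=f(\mathbf{x}_t,\mathbf{u}^{\mathrm{nom}}_t)$, draws $N$ control sequences $U^1_{t+1},\dots,U^N_{t+1}$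 independently from a sampling distribution $\tilde q_{t+1}$ on $\mathcal{U}^H$ (fixed before the draw), rolls each out from $\mathbf{x}_{t+1}$ to get $\tau^i_{t+1}$, and lets $i^*\in\arg\min_i C(\tau^i_{t+1})$. If $C(\tau^{i^*}_{t+1})<0$ it outputs $\mathbf{u}^{\mathrm{safe}}_t=\mathbf{u}^{\mathrm{nom}}_t$ and stores $U^{i^*}_{t+1}$; otherwise the filter intervenes, outputting $\mathbf{u}^{\mathrm{safe}}_t=\bar{\mathbf{u}}_t$ and storing the shifted sequence $(\bar{\mathbf{u}}_{t+1},\dots,\bar{\mathbf{u}}_{t+H-1},\mathbf{u}')$ for some appended input $\mathbf{u}'$. The notation $\mathbf{u}^{\mathrm{safe}}_t\ne\mathbf{u}^{\mathrm{nom}}_t$ means the filter intervenes. *)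

(* Defs.v *)
From HB Require Import structures.
From mathcomp Require Import all_boot all_order all_algebra.
From mathcomp Require Import all_classical all_reals all_analysis.
Set Implicit Arguments. Unset Strict Implicit. Unset Printing Implicit Defensive.
Import Order.TTheory GRing.Theory Num.Theory.
Local Open Scope ring_scope.

Section SafetyFilter.
Variables (R : realType) (X U : Type).
Variables (f : X -> U -> X) (l : X -> R).

Definition rollout_states (x : X) (us : seq U) : seq X := x :: scanl f x us.

Definition traj_cost (x : X) (us : seq U) : R :=
  \big[Num.max/(- l x)]_(y <- scanl f x us) (- l y).

(* Safety indicator O_tau = 1 iff no state of the rollout lies in the failure
   set L = {x | l x <= 0}, i.e. l (x^U_k) > 0 for all k in {0..H}. *)
Definition traj_safe (x : X) (us : seq U) : bool :=
  all (fun y => 0 < l y) (rollout_states x us).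

(* The filter intervenes at time t (u^safe_t <> u^nom_t) iff the best sampled
   cost min_i C(tau^i_{t+1}) is >= 0, i.e. every sampled cost is >= 0. *)
Definition filter_intervenes (N : nat) (x_next : X) (samples : 'I_N -> seq U) : Prop :=
  forall i : 'I_N, 0 <= traj_cost x_next (samples i).

End SafetyFilter.

(* Main.v *)
Require Import Defs.
From HB Require Import structures.
From mathcomp Require Import all_boot all_order all_algebra.
From mathcomp Require Import all_classical all_reals all_analysis.
From mathcomp Require Import ring lra.
Import Order.TTheory GRing.Theory Num.Theory.
Local Open Scope classical_set_scope.
Local Open Scope ring_scope.

Lemma bigmax_lt0 (R : realType) (T : Type) (a : R) (g : T -> R) (s : seq T) :
  (\big[Num.max/a]_(y <- s) g y < 0) = (a < 0) && all (fun y => g y < 0) s.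
Proof.
elim: s => [|y s IH]; first by rewrite big_nil andbT.
by rewrite big_cons gt_max IH /= andbCA.
Qed.

Lemma cost_ge0 (R : realType) (X U : Type) (f : X -> U -> X) (l : X -> R)
  (x : X) (us : seq U) :
  (0 <= traj_cost f l x us) = ~~ traj_safe f l x us.
Proof.
rewrite /traj_cost /traj_safe /rollout_states leNgt bigmax_lt0 /=.
rewrite oppr_lt0; congr (~~ (_ && _)); apply: eq_all => y; by rewrite oppr_lt0.
Qed.

Lemma real_bound (R : realType) (eps beta p : R) (N : nat)
  (heps0 : 0 < eps) (heps1 : eps < 1)
  (hbeta0 : 0 < beta) (hbeta1 : beta < 1)
  (hN : 2 / eps * (ln (1 / beta) + 1) <= N%:R)
  (hp : eps < p) (hp1 : p <= 1) :
  (1 - p) ^+ N <= beta.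
Proof.
have h1 : (1 - p) ^+ N <= (1 - eps) ^+ N.
  by apply: lerXn2r; rewrite ?nnegrE; lra.
have h2 : (1 - eps) ^+ N <= expR (- eps) ^+ N.
  apply: lerXn2r; rewrite ?nnegrE ?expR_ge0 //; first lra.
  by have := expR_ge1Dx (- eps); lra.
have hL : ln (1 / beta) = - ln beta.
  by rewrite div1r lnV // posrE.
have hLn : ln beta < 0 by apply: ln_lt0; rewrite hbeta0 hbeta1.
have h3 : expR (- eps) ^+ N <= beta.
  rewrite -expRM_natr -{1}(@lnK _ beta) ?posrE // ler_expR.
  rewrite hL in hN.
  have e : eps * (2 / eps * (- ln beta + 1)) = 2 * (- ln beta + 1).
    by field; rewrite gt_eqF.
  have : eps * (2 / eps * (- ln beta + 1)) <= eps * N%:R.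
    by rewrite ler_pM2l.
  rewrite e; lra.
by apply: le_trans h3; apply: le_trans h2.
Qed.

Theorem theorem1
  (R : realType) (X : Type) (dU : measure_display) (U : measurableType dU)
  (f : X -> U -> X) (l : X -> R) (H : nat) (hH : (1 <= H)%N)
  (x_t : X) (u_nom : U)
  (q : probability (H.-tuple U) R)
  (hsafe_meas : measurable [set us : H.-tuple U | traj_safe f l (f x_t u_nom) us])
  (eps beta : R) (heps0 : 0 < eps) (heps1 : eps < 1)
  (hbeta0 : 0 < beta) (hbeta1 : beta < 1)
  (N : nat) (hN : 2 / eps * (ln (1 / beta) + 1) <= N%:R)
  (dO : measure_display) (Omega : measurableType dO) (P : probability Omega R)
  (Us : 'I_N -> Omega -> H.-tuple U)
  (hUs_meas : forall i, measurable_fun setT (Us i))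
  (hUs_law : forall i (A : set (H.-tuple U)), measurable A ->
     P (Us i @^-1` A) = q A)
  (hUs_indep : forall A : 'I_N -> set (H.-tuple U),
     (forall i, measurable (A i)) ->
     P (\bigcap_(i in [set: 'I_N]) (Us i @^-1` A i)) =
       (\prod_(i < N) P (Us i @^-1` A i))%E) :
  ((1 - beta)%:E <=
    P [set w : Omega |
         filter_intervenes f l (f x_t u_nom) (fun i => tval (Us i w)) ->
         (q [set us : H.-tuple U | traj_safe f l (f x_t u_nom) us] <= eps%:E)%E])%E.
Proof.
set S := [set us : H.-tuple U | traj_safe f l (f x_t u_nom) us].
have [hle|hlt] := leP (q S) eps%:E.
  rewrite (_ : [set w | _] = setT); last by apply/seteqP; split=> w //= _ _.
  by rewrite probability_setT lee_fin; lra.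
have hSC : measurable (~` S) by exact: measurableC.
have hpre : forall i, measurable (Us i @^-1` ~` S).
  by move=> i; have := hUs_meas i measurableT _ hSC; rewrite setTI.
set B := \bigcap_(i in [set: 'I_N]) (Us i @^-1` ~` S).
have hB : measurable B.
  by apply: fin_bigcap_measurable => // i _; exact: hpre.
rewrite (_ : [set w | _] = ~` B); last first.
  apply/seteqP; split=> w /=.
    move=> hE hall.
    suff : false by [].     apply: hE => i /=; rewrite cost_ge0; apply/negP => hs.
    exact: (hall i I hs).
  move=> hnot hint; exfalso; apply: hnot => i _ hs.
  by have := hint i; rewrite cost_ge0 hs.
rewrite probability_setC // hUs_indep; last by move=> i; exact: hSC.
have hq0 := measure_ge0 q S.
have hq1 : (q S <= 1)%E by apply: probability_le1.
have hfin : q S \is a fin_num by rewrite ge0_fin_numE // (le_lt_trans hq1) ?ltry.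
set p := fine (q S).
have hqp : q S = p%:E by rewrite fineK.
under eq_bigr do rewrite hUs_law // probability_setC // hqp.
rewrite prodEFin prodr_const card_ord -EFinD lee_fin.
rewrite hqp lte_fin in hlt; rewrite hqp lee_fin in hq1.
have := @real_bound R eps beta p N heps0 heps1 hbeta0 hbeta1 hN hlt hq1.
by move=> h; rewrite lerD2l lerN2.
Qed.
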